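(* Let $p$ be an odd prime, $t,s$ positive integers with $p\nmid s$, $r=p^t$, $q=r^s$. Let $\eta$ be the quadratic multiplicative character of $\mathbb{F}_r$ (with $\eta(0)=0$), let $\varphi$ be a nontrivial multiplicative character of $\mathbb{F}_q$, and let $\overline{\varphi}^*$ denote the restriction of $\overline{\varphi}$ to $\mathbb{F}_r^*$. Put $$A=\sum_{x\in\mathbb{F}_q^*}\varphi(x)\,\eta(\mathrm{Tr}_{q/r}(x+1)).$$ Then $|A|=\sqrt q$ if the character $\eta\overline{\varphi}^*$ of $\mathbb{F}_r^*$ is nontrivial, and $|A|=\sqrt{q}/\sqrt{r}$ if $\eta\overline{\varphi}^*$ is trivial.
   Context: $\mathrm{Tr}_{q/r}$ is the trace map from $\mathbb{F}_q$ to $\mathbb{F}_r$. A multiplicative character of $\mathbb{F}_q$ is a homomorphism $\mathbb{F}_q^*\to\mathbb{C}^*$; $\overline{\varphi}$ is its complex conjugate; it is trivial if identically $1$. *)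

(* Defs.v *)
From HB Require Import structures.
From mathcomp Require Import all_boot all_order all_algebra all_field.
Set Implicit Arguments. Unset Strict Implicit. Unset Printing Implicit Defensive.
Import GRing.Theory Num.Theory.
Local Open Scope ring_scope.

(* F plays the role of F_q; F_r is the subfield {y : F | y^r = y}. *)

Definition trace (F : finFieldType) (r s : nat) (x : F) : F :=
  \sum_(i < s) x ^+ (r ^ i).

Definition in_subfield (F : finFieldType) (r : nat) (y : F) : bool := y ^+ r == y.

(* quadratic character eta of F_r (with eta 0 = 0), evaluated on elements of F_r *)
Definition qchar (F : finFieldType) (r : nat) (y : F) : algC :=
  if y == 0 then 0
  else if [exists z : F, in_subfield r z && (z * z == y)] then 1 else -1.

Definition mult_char (F : finFieldType) (phi : F -> algC) : Prop :=
  (forall x y : F, x != 0 -> y != 0 -> phi (x * y) = phi x * phi y) /\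
  (forall x : F, x != 0 -> phi x != 0).

Definition nontrivial_char (F : finFieldType) (phi : F -> algC) : Prop :=
  exists x : F, x != 0 /\ phi x != 1.

(* Main.v *)
Require Import Defs.
From HB Require Import structures.
From mathcomp Require Import all_boot all_order all_algebra all_field.
From mathcomp Require Import zify ring.
Import GRing.Theory Num.Theory.
Local Open Scope ring_scope.
Set Implicit Arguments. Unset Strict Implicit.

Lemma card_roots_lt (F : finFieldType) (P : {poly F}) (A : pred F) :
  P != 0 -> (forall x, A x -> root P x) -> (\sum_(x | A x) 1 < size P)%N.
Proof.
move=> P0 HA; rewrite (sum1_card A) cardE.
apply: max_poly_roots => //; last exact: enum_uniq.
by apply/allP => x; rewrite mem_enum => /HA.
Qed.

Lemma sum_Xn_coef (F : fieldType) (e : nat -> nat) (n : nat) :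
  (forall i j, (i < j)%N -> (e i < e j)%N) ->
  let P := \sum_(i < n.+1) 'X^(e i) : {poly F} in
  P`_(e n) = 1 /\ (size P <= (e n).+1)%N.
Proof.
move=> He P.
have le_e : forall i : 'I_n.+1, (e i <= e n)%N.
  move=> i; have := ltn_ord i; rewrite ltnS leq_eqVlt => /orP[/eqP->//|/He]. 
  exact: ltnW.
split.
  rewrite /P coef_sum (bigD1 ord_max) //= coefXn eqxx big1 ?addr0 //.
  move=> i ne; rewrite coefXn; case: eqP => // eq.
  have : (i < n)%N.
    have := ltn_ord i; rewrite ltnS leq_eqVlt => /orP[/eqP ein|//].
    by move: ne; rewrite -val_eqE /= ein eqxx.
  by move/He; rewrite -eq ltnn.
apply/leq_sizeP => j hj; rewrite /P coef_sum big1 // => i _.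
rewrite coefXn; case: eqP => // ej.
by have := le_e i; rewrite -ej leqNgt hj.
Qed.

Lemma sum_Xn_neq0 (F : fieldType) (e : nat -> nat) (n : nat) :
  (forall i j, (i < j)%N -> (e i < e j)%N) ->
  \sum_(i < n.+1) 'X^(e i) != 0 :> {poly F}.
Proof.
move=> He; have [h _] := @sum_Xn_coef F e n He.
by apply/eqP=> h0; move: h; rewrite h0 coef0 => /eqP; rewrite eq_sym oner_eq0.
Qed.

Lemma frob_pow (F : finFieldType) (r : nat) :
  (forall x y : F, (x + y) ^+ r = x ^+ r + y ^+ r) ->
  forall i (x y : F), (x + y) ^+ (r ^ i) = x ^+ (r ^ i) + y ^+ (r ^ i).
Proof.
move=> Hadd; elim=> [|i IH] x y; first by rewrite expn0 !expr1.
by rewrite expnS mulnC !exprM IH Hadd.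
Qed.

Lemma fix_pow (F : finFieldType) (r : nat) (c : F) :
  c ^+ r = c -> forall i, c ^+ (r ^ i) = c.
Proof.
move=> Hc; elim=> [|i IH]; first by rewrite expn0 expr1.
by rewrite expnS mulnC exprM IH Hc.
Qed.

Lemma frob_sum (F : finFieldType) (r : nat) :
  (0 < r)%N -> (forall x y : F, (x + y) ^+ r = x ^+ r + y ^+ r) ->
  forall n (f : nat -> F), (\sum_(i < n) f i) ^+ r = \sum_(i < n) f i ^+ r.
Proof.
move=> r0 Hadd; elim=> [|n IH] f; first by rewrite !big_ord0 expr0n; case: r r0 Hadd.
by rewrite !big_ord_recr /= Hadd IH.
Qed.

Lemma trace_add (F : finFieldType) r s :
  (forall x y : F, (x + y) ^+ r = x ^+ r + y ^+ r) ->
  forall x y : F, trace r s (x + y) = trace r s x + trace r s y.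
Proof.
move=> Hadd x y; rewrite /trace -big_split /=; apply: eq_bigr => i _.
exact: frob_pow.
Qed.

Lemma trace_mulc (F : finFieldType) r s (c x : F) :
  c ^+ r = c -> trace r s (c * x) = c * trace r s x.
Proof.
move=> Hc; rewrite /trace mulr_sumr; apply: eq_bigr => i _.
by rewrite exprMn (@fix_pow _ _ _ Hc).
Qed.

Lemma trace1 (F : finFieldType) r s : trace r s (1 : F) = s%:R.
Proof. by rewrite /trace (eq_bigr (fun _ => 1)) ?sumr_const ?card_ord // => i; rewrite expr1n. Qed.

Lemma trace_fix (F : finFieldType) r s :
  (0 < r)%N -> (0 < s)%N -> #|F| = (r ^ s)%N ->
  (forall x y : F, (x + y) ^+ r = x ^+ r + y ^+ r) ->
  forall x : F, trace r s x ^+ r = trace r s x.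
Proof.
move=> r0 s0 Hq Hadd x; rewrite /trace (@frob_sum F r r0 Hadd s (fun i => x ^+ (r ^ i))).
case: s s0 Hq => // s _ Hq.
rewrite big_ord_recr big_ord_recl /= -exprM -expnSr -Hq expf_card addrC expn0 expr1.
congr (_ + _); apply: eq_bigr => i _; by rewrite -exprM -expnSr.
Qed.

Lemma count_or (F : finFieldType) (P Q : pred F) :
  (forall x, P x || Q x) ->
  (#|F| <= \sum_(x | P x) 1 + \sum_(x | Q x) 1)%N.
Proof.
move=> HPQ; rewrite -sum1_card (bigID P) /= leq_add2l.
rewrite big_mkcond [X in (_ <= X)%N]big_mkcond /=; apply: leq_sum => x _.
by move: (HPQ x); case: (P x); case: (Q x).
Qed.

Lemma sum_const_n (F : finFieldType) (P : pred F) (c : nat) :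
  (\sum_(x | P x) c = (\sum_(x | P x) 1) * c)%N.
Proof. by rewrite big_distrl /=; apply: eq_bigr => *; rewrite mul1n. Qed.

Lemma card_fr (F : finFieldType) (r s : nat) :
  (1 < r)%N -> (0 < s)%N -> #|F| = (r ^ s)%N ->
  (\sum_(x : F | x ^+ r == x) 1)%N = r.
Proof.
move=> r1 s0 Hq.
apply/eqP; rewrite eqn_leq; apply/andP; split.
  have := @card_roots_lt F ('X^r - 'X) (fun x => x ^+ r == x).
  have sz : size ('X^r - 'X : {poly F}) = r.+1.
    by rewrite size_addl size_polyXn // size_opp size_polyX ltnS.
  rewrite sz ltnS; apply.
    by rewrite -size_poly_eq0 sz.
  by move=> x; rewrite /root !hornerE subr_eq0.
pose k := (\sum_(j < s) r ^ j)%N.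
have Hk : (r ^ s).-1 = (r.-1 * k)%N by rewrite predn_exp.
have rs1 : (1 < r ^ s)%N by rewrite -{1}(expn0 r) ltn_exp2l.
case Ek : k Hk => [|k'] Hk.
  by rewrite muln0 in Hk; move: rs1 Hk; case: (r ^ s)%N => // [[|]].
pose R := \sum_(j < k'.+1) 'X^(r.-1 * j) : {poly F}.
have He : forall i j, (i < j)%N -> (r.-1 * i < r.-1 * j)%N.
  by move=> i j ij; rewrite ltn_pmul2l // -ltnS prednK // ltnW.
have [_ szR] := @sum_Xn_coef F (fun j => r.-1 * j)%N k' He.
have R0 := @sum_Xn_neq0 F (fun j => r.-1 * j)%N k' He.
have rootR : forall x : F, (x ^+ r == x) || root R x.
  move=> x; rewrite /root /R horner_sum.
  have -> : \sum_(i < k'.+1) ('X^(r.-1 * i)).[x] = \sum_(j < k'.+1) (x ^+ r.-1) ^+ j.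
    by apply: eq_bigr => j _; rewrite hornerXn exprM.
  have : x ^+ (r ^ s) - x = (x ^+ r - x) * \sum_(j < k'.+1) (x ^+ r.-1) ^+ j.
    have e1 : (r ^ s = (r.-1 * k'.+1).+1)%N.
      by rewrite -Hk prednK // expn_gt0 ltnW.
    rewrite e1 exprS exprM -{3}(mulr1 x) -mulrBr subrX1.
    by rewrite mulrA mulrBr mulr1 -exprS prednK ?mulrBl // ltnW.
  by rewrite -Hq expf_card subrr => /esym/eqP; rewrite mulf_eq0 subr_eq0.
have := count_or rootR.
have := @card_roots_lt F R (fun x => root R x) R0 (fun x h => h).
move=> h1 h2; have h3 := leq_trans h1 szR.
have : ((r ^ s).-1 = r.-1 * k' + r.-1)%N by rewrite Hk mulnS addnC.
have : (0 < r ^ s)%N by rewrite expn_gt0 ltnW.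
rewrite Hq in h2.
move: h3 h2; set m := (r.-1 * k')%N; set n := (r ^ s)%N; set A := (\sum_(x | x ^+ r == x) 1)%N; set B := (\sum_(x | root R x) 1)%N. lia.
Qed.

Lemma trace_nonzero (F : finFieldType) (r s : nat) :
  (1 < r)%N -> (0 < s)%N -> #|F| = (r ^ s)%N ->
  exists x : F, trace r s x != 0.
Proof.
move=> r1 s0 Hq; case: s s0 Hq => // s _ Hq.
apply/existsP; rewrite -negb_forall; apply/negP => /forallP H.
have He : forall i j, (i < j)%N -> (r ^ i < r ^ j)%N.
  by move=> i j ij; rewrite ltn_exp2l.
have [_ szP] := @sum_Xn_coef F (fun j => r ^ j)%N s He.
have P0 := @sum_Xn_neq0 F (fun j => r ^ j)%N s He.
have := @card_roots_lt F _ predT P0.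
have -> : (\sum_(x : F | predT x) 1 = #|F|)%N by rewrite sum1_card.
have : forall x : F, predT x -> root (\sum_(i < s.+1) 'X^(r ^ i) : {poly F}) x.
  move=> x hx; rewrite /root horner_sum.
  have h : trace r s.+1 x = (0 : F) by apply/eqP; exact: H x.
  rewrite (eq_bigr (fun i : 'I_s.+1 => x ^+ (r ^ i))); last by move=> i _; rewrite hornerXn.
  by apply/eqP; exact: h.
move=> h /(_ h) h2; have := leq_trans h2 szP.
rewrite Hq expnS ltnS => h3.
have : (0 < r ^ s)%N by rewrite expn_gt0 ltnW.
move: h3; set m := (r ^ s)%N; nia.
Qed.

Lemma kernel_size (F : finFieldType) (r s : nat) :
  (1 < r)%N -> (0 < s)%N -> #|F| = (r ^ s)%N ->
  (forall x y : F, (x + y) ^+ r = x ^+ r + y ^+ r) ->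
  (r * \sum_(x : F | trace r s x == 0%R) 1)%N = #|F|.
Proof.
move=> r1 s0 Hq Hadd.
have r0 : (0 < r)%N by rewrite ltnW.
have [x1 hx1] := trace_nonzero r1 s0 Hq.
set b := trace r s x1 in hx1.
have hb : b ^+ r = b by apply: trace_fix.
have fib : forall a : F, a ^+ r == a ->
    (\sum_(x : F | trace r s x == a) 1 = \sum_(x : F | trace r s x == 0%R) 1)%N.
  move=> a /eqP ha.
  pose x0 := (a / b) * x1.
  have tx0 : trace r s x0 = a.
    rewrite trace_mulc ?exprMn ?exprVn ?ha ?hb // -/b.
    by rewrite divfK.
  rewrite (reindex_inj (addIr x0)) /=; apply: eq_bigl => x.
  by rewrite trace_add // tx0 -{2}(add0r a) (inj_eq (addIr a)).
have -> : #|F| = (\sum_(a : F | a ^+ r == a) \sum_(x : F | true && (trace r s x == a)) 1)%N.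
  rewrite -sum1_card; apply: partition_big => x _; apply/eqP; exact: trace_fix.
rewrite [RHS](eq_bigr (fun _ => \sum_(x : F | trace r s x == 0%R) 1)%N); last first.
  by move=> a ha; exact: fib a ha.
by rewrite sum_const_n (card_fr r1 s0 Hq) mulnC.
Qed.

Lemma sub_count (F : finFieldType) (P Q : pred F) :
  (forall x, P x -> Q x) -> (\sum_(x | P x) 1 <= \sum_(x | Q x) 1)%N.
Proof.
move=> PQ; rewrite big_mkcond [X in (_ <= X)%N]big_mkcond /=; apply: leq_sum => x _.
by case: (boolP (P x)) => // /PQ ->.
Qed.

Lemma frs_pow (F : finFieldType) r (z : F) :
  (0 < r)%N -> z != 0 -> z ^+ r = z -> z ^+ r.-1 = 1.
Proof.
move=> r0 z0 hz; apply: (mulfI z0); rewrite mulr1 -exprS prednK //.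
Qed.

Lemma sq_count (F : finFieldType) (P : pred F) :
  (forall z, P z -> P (z * z)) ->
  (\sum_(z | P z) 1 <= (\sum_(y | P y && [exists z, P z && (z * z == y)%R]) 1) * 2)%N.
Proof.
move=> HP.
rewrite (partition_big (fun z => z * z) (fun y => P y && [exists z, P z && (z * z == y)])) /=; last first.
  by move=> z hz; rewrite HP //=; apply/existsP; exists z; rewrite hz eqxx.
rewrite -sum_const_n; apply: leq_sum => y _.
apply: (@leq_trans (\sum_(z | (z * z == y)%R) 1)%N).
  by apply: sub_count => z /andP[].
have h := @card_roots_lt F ('X^2 - y%:P) (fun z => z * z == y).
rewrite size_XnsubC // in h; apply: h.
  by rewrite -size_poly_eq0 size_XnsubC.
by move=> z /eqP hz; rewrite /root !hornerE expr2 hz subrr.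
Qed.

Definition frs (F : finFieldType) (r : nat) (x : F) := (x != 0) && (x ^+ r == x).

Lemma fr_mul (F : finFieldType) r (x y : F) :
  x ^+ r == x -> y ^+ r == y -> (x * y) ^+ r == x * y.
Proof. by move=> /eqP hx /eqP hy; rewrite exprMn hx hy. Qed.

Lemma frs_mul (F : finFieldType) r (x y : F) :
  frs r x -> frs r y -> frs r (x * y).
Proof.
by move=> /andP[x0 hx] /andP[y0 hy]; rewrite /frs mulf_neq0 ?fr_mul.
Qed.

Lemma card_frs (F : finFieldType) (r s : nat) :
  (1 < r)%N -> (0 < s)%N -> #|F| = (r ^ s)%N ->
  (\sum_(x : F | frs r x) 1)%N = r.-1.
Proof.
move=> r1 s0 Hq; have := card_fr r1 s0 Hq.
rewrite (bigD1 0) /=; last by rewrite expr0n gtn_eqF ?(ltnW r1).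
move=> h; have -> : r.-1 = (\sum_(i : F | (i ^+ r == i) && (i != 0%R)) 1)%N by rewrite -[X in X.-1]h add1n.
apply: eq_bigl => x; by rewrite /frs andbC.
Qed.

Lemma sq_exists_frs (F : finFieldType) r (y : F) : y != 0 ->
  [exists z, in_subfield r z && (z * z == y)] = [exists z, frs r z && (z * z == y)].
Proof.
move=> y0; apply/existsP/existsP => [[z /andP[hz /eqP hzy]]|[z /andP[/andP[_ hz] hzy]]].
  exists z; rewrite /frs -/(in_subfield r z) hz hzy eqxx !andbT /=.
  by apply: contraNneq y0 => z0; rewrite -hzy z0 mul0r.
by exists z; rewrite /in_subfield hz.
Qed.

Lemma euler_crit (F : finFieldType) (r s : nat) (y : F) :
  (1 < r)%N -> odd r -> (0 < s)%N -> #|F| = (r ^ s)%N -> frs r y ->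
  [exists z, in_subfield r z && (z * z == y)] = (y ^+ r./2 == 1).
Proof.
move=> r1 rodd s0 Hq hy.
have hm : (r./2 * 2 = r.-1)%N by rewrite muln2 odd_halfK.
have r0 : (0 < r)%N by rewrite ltnW.
have m0 : (0 < r./2)%N.
  by move: hm r1; set m := r./2; lia.
have y0 : y != 0 by case/andP: hy.
rewrite sq_exists_frs //.
apply/idP/idP.
  case/existsP => z /andP[/andP[z0 /eqP hz] /eqP hzy].
  by rewrite -hzy -expr2 -exprM mulnC hm frs_pow.
move=> hym; case: (boolP [exists z, frs r z && (z * z == y)]) => // nsq; exfalso.
pose Sqp := fun x : F => frs r x && [exists z, frs r z && (z * z == x)].
have c1 : (r.-1 <= (\sum_(x | Sqp x) 1) * 2)%N.
  have hsq : forall w : F, frs r w -> frs r (w * w) by move=> w0 hw0; by apply: frs_mul.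
  rewrite -(card_frs r1 s0 Hq); exact: sq_count hsq.
have c2 : ((\sum_(x | Sqp x || (x == y)) 1) = (\sum_(x | Sqp x) 1).+1)%N.
  rewrite (bigD1 y) /=; last by rewrite eqxx orbT.
  rewrite add1n; congr S; apply: eq_bigl => x.
  case: (eqVneq x y) => [->|]; first by rewrite /Sqp hy (negbTE nsq).
  by rewrite orbF andbT.
have c3 : (\sum_(x | Sqp x || (x == y)) 1 <= \sum_(x : F | (x ^+ r./2 == 1)%R) 1)%N.
  apply: sub_count => x /orP[/andP[hx]|/eqP->//].
  case/existsP => z /andP[/andP[z0 /eqP hz] /eqP hzy].
  by rewrite -hzy -expr2 -exprM mulnC hm frs_pow.
have c4 : (\sum_(x : F | (x ^+ r./2 == 1)%R) 1 < r./2.+1)%N.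
  have h := @card_roots_lt F ('X^(r./2) - 1) (fun x => x ^+ r./2 == 1).
  rewrite size_Xn_sub_1 // in h; apply: h.
    by rewrite -size_poly_eq0 size_Xn_sub_1.
  by move=> x /eqP hx; rewrite /root !hornerE hx subrr.
move: c1 c2 c3 c4 hm; set A := (\sum_(x | Sqp x) 1)%N; set B := (\sum_(x | Sqp x || (x == y)) 1)%N.
set C := (\sum_(x : F | (x ^+ r./2 == 1)%R) 1)%N; lia.
Qed.

Lemma qchar_frs (F : finFieldType) (r s : nat) (y : F) :
  (1 < r)%N -> odd r -> (0 < s)%N -> #|F| = (r ^ s)%N -> frs r y ->
  qchar r y = if y ^+ r./2 == 1 then 1 else -1.
Proof.
move=> r1 rodd s0 Hq hy; have y0 : y != 0 by case/andP: hy.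
by rewrite /qchar (negbTE y0) (euler_crit r1 rodd s0 Hq hy).
Qed.

Lemma pm1 (F : finFieldType) (r : nat) (y : F) :
  (1 < r)%N -> odd r -> frs r y -> (y ^+ r./2 == 1) || (y ^+ r./2 == -1).
Proof.
move=> r1 rodd /andP[y0 /eqP hy].
have : (y ^+ r./2) ^+ 2 - 1 = 0.
  by rewrite -exprM muln2 odd_halfK // frs_pow ?subrr // ltnW.
by rewrite subr_sqr_1 => /eqP; rewrite mulf_eq0 subr_eq0 addr_eq0.
Qed.

Lemma qchar0 (F : finFieldType) r : qchar r (0 : F) = 0.
Proof. by rewrite /qchar eqxx. Qed.

Lemma qchar_mul (F : finFieldType) (r s : nat) (x y : F) :
  (1 < r)%N -> odd r -> (0 < s)%N -> #|F| = (r ^ s)%N -> (1 : F) != -1 ->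
  x ^+ r == x -> y ^+ r == y -> qchar r (x * y) = qchar r x * qchar r y.
Proof.
move=> r1 rodd s0 Hq H1 hx hy.
case: (eqVneq x 0) => [->|x0]; first by rewrite mul0r qchar0 mul0r.
case: (eqVneq y 0) => [->|y0]; first by rewrite mulr0 qchar0 mulr0.
have fx : frs r x by rewrite /frs x0.
have fy : frs r y by rewrite /frs y0.
have fxy := frs_mul fx fy.
have H1' : (-1 : F) == 1 = false by rewrite eq_sym (negbTE H1).
rewrite !(qchar_frs r1 rodd s0 Hq) // exprMn.
by case/orP: (pm1 r1 rodd fx) => /eqP->; case/orP: (pm1 r1 rodd fy) => /eqP->;
  rewrite ?mulr1 ?mul1r ?mulrNN ?eqxx ?H1' ?mulr1 ?mulN1r ?mul1r ?mulr1 ?opprK ?eqxx.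
Qed.

Lemma qchar_sq (F : finFieldType) (r s : nat) (y : F) :
  (1 < r)%N -> odd r -> (0 < s)%N -> #|F| = (r ^ s)%N -> frs r y ->
  qchar r y * qchar r y = 1.
Proof.
move=> r1 rodd s0 Hq hy; rewrite (qchar_frs r1 rodd s0 Hq hy).
by case: ifP => _; rewrite ?mulr1 ?mulrNN ?mulr1.
Qed.

Lemma qchar_conj (F : finFieldType) r (y : F) : (qchar r y)^* = qchar r y.
Proof. by rewrite /qchar; case: ifP => _; [rewrite conjC0|case: ifP => _; rewrite ?conjC1 ?conjCN1]. Qed.

Lemma nonsquare (F : finFieldType) (r s : nat) :
  (1 < r)%N -> odd r -> (0 < s)%N -> #|F| = (r ^ s)%N ->
  exists a : F, frs r a /\ qchar r a = -1.
Proof.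
move=> r1 rodd s0 Hq.
have hm : (r./2 * 2 = r.-1)%N by rewrite muln2 odd_halfK.
have m0 : (0 < r./2)%N by move: hm r1; set m := r./2; lia.
case: (boolP [exists a : F, frs r a && (a ^+ r./2 != 1)]).
  case/existsP => a /andP[ha na]; exists a; split => //.
  by rewrite (qchar_frs r1 rodd s0 Hq ha) (negbTE na).
rewrite negb_exists => /forallP H; exfalso.
have c1 : (\sum_(x : F | frs r x) 1 <= \sum_(x : F | (x ^+ r./2 == 1)%R) 1)%N.
  by apply: sub_count => x hx; move: (H x); rewrite hx /= negbK.
have c4 : (\sum_(x : F | (x ^+ r./2 == 1)%R) 1 < r./2.+1)%N.
  have h := @card_roots_lt F ('X^(r./2) - 1) (fun x => x ^+ r./2 == 1).
  rewrite size_Xn_sub_1 // in h; apply: h.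
    by rewrite -size_poly_eq0 size_Xn_sub_1.
  by move=> x /eqP hx; rewrite /root !hornerE hx subrr.
rewrite (card_frs r1 s0 Hq) in c1.
move: c1 c4 hm m0; set C := (\sum_(x : F | (x ^+ r./2 == 1)%R) 1)%N; set m := r./2; lia.
Qed.

Lemma char_sum0 (F : finFieldType) (P : pred F) (f : F -> algC) (a : F) :
  a != 0 -> (forall x, P (a * x) = P x) ->
  (forall x, P x -> f (a * x) = f a * f x) -> f a != 1 ->
  \sum_(x | P x) f x = 0.
Proof.
move=> a0 HP Hf fa1.
have h : \sum_(x | P x) f x = f a * \sum_(x | P x) f x.
  rewrite {1}(reindex_inj (mulfI a0)) /= (eq_bigl P) // mulr_sumr.
  by apply: eq_bigr => x hx; rewrite Hf.
have : (1 - f a) * \sum_(x | P x) f x = 0 by rewrite mulrBl mul1r -h subrr.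
by move/eqP; rewrite mulf_eq0 subr_eq0 eq_sym (negbTE fa1) => /eqP.
Qed.

Lemma phi1 (F : finFieldType) (phi : F -> algC) : mult_char phi -> phi 1 = 1.
Proof.
case=> Hm Hn; have := Hm 1 1 (oner_neq0 _) (oner_neq0 _); rewrite mulr1.
by move/(congr1 (fun z => z / phi 1)); rewrite mulfK ?divff ?Hn ?oner_neq0.
Qed.

Lemma phi_pow (F : finFieldType) (phi : F -> algC) (x : F) n :
  mult_char phi -> x != 0 -> phi (x ^+ n) = phi x ^+ n.
Proof.
move=> Hphi x0; elim: n => [|n IH]; first by rewrite !expr0 phi1.
by rewrite !exprS (proj1 Hphi) ?IH // expf_neq0.
Qed.

Lemma phi_unit (F : finFieldType) (phi : F -> algC) (x : F) :
  mult_char phi -> x != 0 -> phi x * (phi x)^* = 1.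
Proof.
move=> Hphi x0; rewrite -normCK.
have q1 : (0 < #|F|.-1)%N.
  have := finNzRing_gt1 F.
  by case: #|F| => [|[|]].
have h : phi x ^+ #|F|.-1 = 1.
  rewrite -phi_pow // -(phi1 Hphi); congr phi.
  by apply: (mulfI x0); rewrite mulr1 -exprS prednK ?expf_card // (leq_trans q1 (leq_pred _)).
have : `|phi x| ^+ #|F|.-1 == 1 by rewrite -normrX h normr1.
by rewrite pexpr_eq1 // => /eqP->; rewrite expr1n.
Qed.

Lemma phi_conjK (F : finFieldType) (phi : F -> algC) (x y : F) :
  mult_char phi -> x != 0 -> y != 0 -> phi (x * y) * (phi x)^* = phi y.
Proof.
move=> Hphi x0 y0; rewrite (proj1 Hphi) // mulrAC phi_unit // mul1r //.
Qed.

Lemma fr0 (F : finFieldType) r : (0 < r)%N -> (0 : F) ^+ r == 0.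
Proof. by move=> r0; rewrite expr0n gtn_eqF. Qed.

Lemma fr1 (F : finFieldType) r : (1 : F) ^+ r == 1.
Proof. by rewrite expr1n. Qed.

Lemma fr_add (F : finFieldType) r (x y : F) :
  (forall x y : F, (x + y) ^+ r = x ^+ r + y ^+ r) ->
  x ^+ r == x -> y ^+ r == y -> (x + y) ^+ r == x + y.
Proof. by move=> Hadd /eqP hx /eqP hy; rewrite Hadd hx hy. Qed.

Lemma frob_opp (F : finFieldType) r (x : F) :
  (0 < r)%N -> (forall x y : F, (x + y) ^+ r = x ^+ r + y ^+ r) ->
  (- x) ^+ r = - x ^+ r.
Proof.
move=> r0 Hadd; apply/eqP; rewrite -addr_eq0 addrC -Hadd subrr.
by rewrite expr0n gtn_eqF.
Qed.

Lemma fr_opp (F : finFieldType) r (x : F) :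
  (0 < r)%N -> (forall x y : F, (x + y) ^+ r = x ^+ r + y ^+ r) ->
  x ^+ r == x -> (- x) ^+ r == - x.
Proof. by move=> r0 Hadd /eqP hx; rewrite frob_opp // hx. Qed.

Lemma fr_inv (F : finFieldType) r (x : F) : x ^+ r == x -> x^-1 ^+ r == x^-1.
Proof. by move=> /eqP hx; rewrite exprVn hx. Qed.

Lemma frs_mulL (F : finFieldType) r (a x : F) :
  frs r a -> frs r (a * x) = frs r x.
Proof.
move=> /andP[a0 /eqP ha]; rewrite /frs mulf_eq0 negb_or a0 /= exprMn ha (can_eq (mulKf a0)) //.
Qed.

Lemma trace0 (F : finFieldType) r s :
  (forall x y : F, (x + y) ^+ r = x ^+ r + y ^+ r) -> trace r s (0 : F) = 0.
Proof.
move=> Hadd; have h := trace_add s Hadd 0 0; rewrite addr0 in h.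
by apply: (@addrI _ (trace r s (0 : F))); rewrite addr0 -h.
Qed.

Lemma trace_sub (F : finFieldType) r s (x y : F) :
  (0 < r)%N -> (forall x y : F, (x + y) ^+ r = x ^+ r + y ^+ r) ->
  trace r s (x - y) = trace r s x - trace r s y.
Proof.
move=> r0 Hadd; rewrite trace_add //; congr (_ + _).
have h := trace_add s Hadd y (- y); rewrite subrr trace0 // in h.
by apply/eqP; rewrite -addr_eq0 addrC -h.
Qed.

Lemma qchar1 (F : finFieldType) r : qchar r (1 : F) = 1.
Proof.
rewrite /qchar oner_eq0; case: existsP => // [[]]; exists 1.
by rewrite /in_subfield expr1n mulr1 !eqxx.
Qed.

Lemma sum1C (F : finFieldType) (P : pred F) :
  \sum_(x | P x) (1 : algC) = (\sum_(x | P x) 1)%N%:R.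
Proof. by rewrite natr_sum. Qed.

Definition Ssum (F : finFieldType) r s (phi : F -> algC) (a : F) :=
  \sum_(x | (x != 0) && (trace r s x == a)) phi x.

Lemma S_scale (F : finFieldType) r s (phi : F -> algC) (a : F) :
  mult_char phi -> frs r a -> Ssum r s phi a = phi a * Ssum r s phi 1.
Proof.
move=> Hphi ha; have /andP[a0 /eqP far] := ha.
rewrite /Ssum (reindex_inj (mulfI a0)) /= mulr_sumr.
apply: eq_big => [x|x]; last first.
  by case/andP; rewrite mulf_eq0 negb_or => /andP[_ x0] _; rewrite (proj1 Hphi).
rewrite mulf_eq0 negb_or a0 /= trace_mulc //.
by rewrite -{2}(mulr1 a) (can_eq (mulKf a0)).
Qed.

Lemma S_total (F : finFieldType) r s (phi : F -> algC) :
  (0 < r)%N -> (0 < s)%N -> #|F| = (r ^ s)%N ->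
  (forall x y : F, (x + y) ^+ r = x ^+ r + y ^+ r) ->
  \sum_(a | a ^+ r == a) Ssum r s phi a = \sum_(x | x != 0) phi x.
Proof.
move=> r0 s0 Hq Hadd; rewrite /Ssum [RHS](partition_big (trace r s) (fun a => a ^+ r == a)) //.
by move=> x _; rewrite trace_fix.
Qed.

Lemma sumC_const (F : finFieldType) (P : pred F) (c : algC) :
  \sum_(x | P x) c = (\sum_(x | P x) 1)%N%:R * c.
Proof. by rewrite natr_sum mulr_suml; apply: eq_bigr => x _; rewrite mul1r. Qed.

Lemma count_nz (F : finFieldType) : (\sum_(x : F | x != 0%R) 1)%N = #|F|.-1.
Proof.
have : (\sum_(x : F) 1)%N = #|F| by rewrite sum1_card.
by rewrite (bigD1 0) //= add1n => <-.
Qed.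

Lemma part_tr (F : finFieldType) r s (G : F -> algC) :
  (0 < r)%N -> (0 < s)%N -> #|F| = (r ^ s)%N ->
  (forall x y : F, (x + y) ^+ r = x ^+ r + y ^+ r) ->
  \sum_(x | x != 0) G x =
  \sum_(a | a ^+ r == a) \sum_(x | (x != 0) && (trace r s x == a)) G x.
Proof.
move=> r0 s0 Hq Hadd; rewrite (partition_big (trace r s) (fun a => a ^+ r == a)) //.
by move=> x _; rewrite trace_fix.
Qed.

Lemma phi_sum0 (F : finFieldType) (phi : F -> algC) :
  mult_char phi -> nontrivial_char phi -> \sum_(x | x != 0) phi x = 0.
Proof.
move=> Hphi [g [g0 pg]]; apply: (char_sum0 (a := g)) => // x.
  by rewrite mulf_eq0 negb_or g0.
by move=> x0; rewrite (proj1 Hphi).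
Qed.

Lemma S_norm (F : finFieldType) r s (phi : F -> algC) :
  (1 < r)%N -> (0 < s)%N -> #|F| = (r ^ s)%N ->
  (forall x y : F, (x + y) ^+ r = x ^+ r + y ^+ r) ->
  mult_char phi -> nontrivial_char phi ->
  \sum_(a | a ^+ r == a) Ssum r s phi a * (Ssum r s phi a)^* =
  #|F|%:R - (\sum_(x : F | trace r s x == 0%R) 1)%N%:R.
Proof.
move=> r1 s0 Hq Hadd Hphi Hnt.
have r0 : (0 < r)%N by rewrite ltnW.
pose c (y z : F) := trace r s (y * (z - 1)) == 0.
have e1 : forall a : F, Ssum r s phi a * (Ssum r s phi a)^* =
    \sum_(y | (y != 0) && (trace r s y == a)) Ssum r s phi (trace r s y) * (phi y)^*.
  move=> a; rewrite {2}/Ssum rmorph_sum mulr_sumr.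
  by apply: eq_bigr => y /andP[_ /eqP ->].
rewrite (eq_bigr _ (fun a _ => e1 a)) -part_tr //.
have e2 : forall y : F, y != 0 -> Ssum r s phi (trace r s y) * (phi y)^* =
    \sum_(z | (z != 0) && c y z) phi z.
  move=> y y0; rewrite /Ssum (reindex_inj (mulfI y0)) mulr_suml.
  apply: eq_big => [z|z].
    by rewrite /c mulf_eq0 negb_or y0 /= mulrBr mulr1 trace_sub // subr_eq0.
  by rewrite mulf_eq0 negb_or y0 /= => /andP[z0 _]; exact: phi_conjK.
rewrite (eq_bigr _ e2).
rewrite (eq_bigr (fun y => \sum_(z | z != 0) (if c y z then phi z else 0))); last first.
  by move=> y _; rewrite big_mkcondr.
rewrite exchange_big /=.
rewrite (eq_bigr (fun z => phi z * (\sum_(y : F | (y != 0%R) && c y z) 1)%N%:R)); last first.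
  by move=> z _; rewrite -big_mkcondr sumC_const mulrC.
rewrite (bigD1 1) ?oner_neq0 //=.
have N1 : (\sum_(y : F | (y != 0%R) && c y 1%R) 1)%N = #|F|.-1.
  rewrite -count_nz; apply: eq_bigl => y.
  by rewrite /c subrr mulr0 (trace0 s Hadd) eqxx andbT.
set K := (\sum_(x : F | trace r s x == 0%R) 1)%N.
have K1 : K = (\sum_(y : F | (y != 0%R) && (trace r s y == 0%R)) 1).+1%N.
  rewrite /K (bigD1 0) /= ?(trace0 s Hadd) // add1n; congr S; apply: eq_bigl => y.
  by rewrite andbC.
have Nz : forall z : F, z != 1 ->
    (\sum_(y : F | (y != 0%R) && c y z) 1)%N = (\sum_(y : F | (y != 0%R) && (trace r s y == 0%R)) 1)%N.
  move=> z z1; have z10 : (z - 1)^-1 != 0 by rewrite invr_eq0 subr_eq0.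
  rewrite (reindex_inj (mulIf z10)) /=; apply: eq_bigl => y.
  rewrite /c mulf_eq0 negb_or z10 andbT -mulrA mulVf ?mulr1 //.
  by rewrite subr_eq0.
rewrite (eq_bigr (fun z => phi z * (K%:R - 1))); last first.
  by move=> z /andP[_ z1]; rewrite Nz // K1 -natr1 addrK.
rewrite -mulr_suml N1 phi1 //.
have hs := phi_sum0 Hphi Hnt; rewrite (bigD1 1) ?oner_neq0 //= phi1 // in hs.
have -> : \sum_(i | (i != 0) && (i != 1)) phi i = -1.
  by apply/eqP; rewrite -addr_eq0 addrC hs.
have -> : #|F| = (#|F|.-1).+1 by rewrite prednK // (leq_trans _ (finNzRing_gt1 F)).
rewrite -natr1; ring.
Qed.


Lemma neg1_neq1 : (-1 : algC) != 1.
Proof. by rewrite eq_sym -subr_eq0 opprK -mulr2n mulrn_eq0 oner_eq0. Qed.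

Lemma fr_frs (F : finFieldType) r (x : F) : x ^+ r == x -> x != 0 -> frs r x.
Proof. by move=> h x0; rewrite /frs x0 h. Qed.

Lemma eta_sum0 (F : finFieldType) (r s : nat) :
  (1 < r)%N -> odd r -> (0 < s)%N -> #|F| = (r ^ s)%N -> (1 : F) != -1 ->
  \sum_(c : F | c ^+ r == c) qchar r c = 0.
Proof.
move=> r1 rodd s0 Hq H1.
have f0 : (0 : F) ^+ r == 0 by rewrite expr0n gtn_eqF // ltnW.
rewrite (bigD1 0) /= ?f0 // qchar0 add0r.
rewrite (eq_bigl (frs r)); last by move=> x; rewrite /frs andbC.
have [a [ha qa]] := nonsquare r1 rodd s0 Hq.
apply: (char_sum0 (a := a)); first by case/andP: ha.
- by move=> x; rewrite frs_mulL.
- move=> x /andP[_ hx]; case/andP: ha => _ ha.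
  by rewrite (qchar_mul r1 rodd s0 Hq H1).
- by rewrite qa neg1_neq1.
Qed.

Definition Jsum (F : finFieldType) r (phi : F -> algC) (b : F) :=
  \sum_(a | frs r a) qchar r (a + b) * phi a.

Lemma J_scale (F : finFieldType) (r s : nat) (phi : F -> algC) (b : F) :
  (1 < r)%N -> odd r -> (0 < s)%N -> #|F| = (r ^ s)%N -> (1 : F) != -1 ->
  (forall x y : F, (x + y) ^+ r = x ^+ r + y ^+ r) ->
  mult_char phi -> frs r b ->
  Jsum r phi b = qchar r b * phi b * Jsum r phi 1.
Proof.
move=> r1 rodd s0 Hq H1 Hadd Hphi hb; have /andP[b0 fb] := hb.
rewrite /Jsum (reindex_inj (mulfI b0)) /= mulr_sumr.
apply: eq_big => [a|a ha]; first by rewrite frs_mulL.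
have /andP[a0 fa] : frs r a by rewrite -(frs_mulL _ hb).
rewrite -{2}(mulr1 b) -mulrDr (qchar_mul r1 rodd s0 Hq H1) //; last first.
  by rewrite fr_add ?fr1.
rewrite (proj1 Hphi) //; ring.
Qed.

Lemma shift_sum (F : finFieldType) r (d : F) (G : F -> algC) :
  (0 < r)%N -> (forall x y : F, (x + y) ^+ r = x ^+ r + y ^+ r) -> d ^+ r == d ->
  \sum_(c | c ^+ r == c) G (c + d) = \sum_(c | c ^+ r == c) G c.
Proof.
move=> r0 Hadd hd; rewrite [RHS](reindex_inj (addIr d)) /=; apply: eq_bigl => c.
apply/idP/idP => h; first by rewrite fr_add.
by rewrite -(addrK d c) fr_add ?fr_opp.
Qed.

Lemma E_lemma (F : finFieldType) (r s : nat) (a a' : F) :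
  (1 < r)%N -> odd r -> (0 < s)%N -> #|F| = (r ^ s)%N -> (1 : F) != -1 ->
  (forall x y : F, (x + y) ^+ r = x ^+ r + y ^+ r) ->
  a ^+ r == a -> a' ^+ r == a' ->
  \sum_(b | b ^+ r == b) qchar r (a + b) * qchar r (a' + b) =
  if a == a' then (r.-1)%:R else -1.
Proof.
move=> r1 rodd s0 Hq H1 Hadd ha ha'.
have r0 : (0 < r)%N by rewrite ltnW.
have f0 : (0 : F) ^+ r == 0 by rewrite expr0n gtn_eqF.
set d := a - a'.
have fd : d ^+ r == d by rewrite fr_add ?fr_opp.
rewrite -(shift_sum (fun b => qchar r (a + b) * qchar r (a' + b)) r0 Hadd (fr_opp r0 Hadd ha')).
rewrite (eq_bigr (fun c => qchar r (c + d) * qchar r c)); last first.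
  by move=> c _; rewrite /d; congr (_ * _); congr qchar; ring.
rewrite (bigD1 0) /= ?f0 // qchar0 mulr0 add0r.
rewrite (eq_bigl (frs r)); last by move=> x; rewrite /frs andbC.
case: (eqVneq a a') => [eaa|naa].
  rewrite /d eaa subrr.
  rewrite (eq_bigr (fun _ => 1)); last by move=> c hc; rewrite addr0 (qchar_sq r1 rodd s0 Hq).
  by rewrite sumC_const (card_frs r1 s0 Hq) mulr1.
have d0 : d != 0 by rewrite /d subr_eq0.
have hd : frs r d by rewrite /frs d0.
rewrite (eq_bigr (fun c => qchar r (1 + d * c^-1))); last first.
  move=> c hc; have /andP[c0 fc] := hc.
  have -> : c + d = c * (1 + d * c^-1) by rewrite mulrDr mulr1 mulrCA divff // mulr1.
  rewrite (qchar_mul r1 rodd s0 Hq H1) //; last by rewrite fr_add ?fr1 // fr_mul // fr_inv.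
  by rewrite mulrAC (qchar_sq r1 rodd s0 Hq) // mul1r.
have hinj : injective (fun c : F => d * c^-1).
  by move=> c c' /(mulfI d0)/invr_inj.
rewrite (reindex_inj hinj) /=.
rewrite (eq_big (frs r) (fun c => qchar r (1 + c))); first last.
- by move=> c _; rewrite invfM invrK mulrA divff // mul1r.
- move=> c; rewrite frs_mulL // /frs invr_eq0 exprVn.
  by rewrite (inj_eq (@invr_inj _)).
have := eta_sum0 r1 rodd s0 Hq H1.
rewrite -(shift_sum _ r0 Hadd (fr1 F r)) (bigD1 0) /= ?f0 // add0r qchar1.
rewrite (eq_bigl (frs r)); last by move=> x; rewrite /frs andbC.
rewrite (eq_bigr (fun c => qchar r (1 + c))) => [h|c _]; last by rewrite addrC.
by apply/eqP; rewrite -addr_eq0 addrC h.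
Qed.

Lemma J_norm (F : finFieldType) (r s : nat) (phi : F -> algC) :
  (1 < r)%N -> odd r -> (0 < s)%N -> #|F| = (r ^ s)%N -> (1 : F) != -1 ->
  (forall x y : F, (x + y) ^+ r = x ^+ r + y ^+ r) ->
  mult_char phi ->
  \sum_(b | b ^+ r == b) Jsum r phi b * (Jsum r phi b)^* =
  r%:R * (r.-1)%:R - (\sum_(a | frs r a) phi a) * (\sum_(a | frs r a) phi a)^*.
Proof.
move=> r1 rodd s0 Hq H1 Hadd Hphi.
set T := \sum_(a | frs r a) phi a.
rewrite (eq_bigr (fun b => \sum_(a | frs r a) \sum_(a' | frs r a')
    (qchar r (a + b) * qchar r (a' + b)) * (phi a * (phi a')^*))); last first.
  move=> b _; rewrite /Jsum rmorph_sum big_distrl /=; apply: eq_bigr => a _.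
  rewrite big_distrr /=; apply: eq_bigr => a' _.
  rewrite rmorphM /= qchar_conj; ring.
rewrite exchange_big /=.
have hr : (r.-1)%:R = r%:R - 1 :> algC by rewrite -{2}(prednK (ltnW r1)) -natr1 addrK.
rewrite (eq_bigr (fun a => r%:R - phi a * T^*)); last first.
  move=> a ha; rewrite exchange_big /=.
  rewrite (eq_bigr (fun a' => (if a == a' then (r.-1)%:R else -1) * (phi a * (phi a')^*))); last first.
    move=> a' ha'; rewrite -mulr_suml (E_lemma r1 rodd s0 Hq H1 Hadd) //.
      by case/andP: ha.
    by case/andP: ha'.
  rewrite (bigD1 a) //= eqxx (phi_unit Hphi) ?mulr1; last by case/andP: ha.
  rewrite (eq_bigr (fun a' => - (phi a * (phi a')^*))); last first.
    by move=> a' /andP[_ na]; rewrite eq_sym (negbTE na) mulN1r.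
  rewrite sumrN.
  have : T^* = (phi a)^* + \sum_(a' | frs r a' && (a' != a)) (phi a')^*.
    by rewrite /T rmorph_sum (bigD1 a).
  move=> hT; rewrite -mulr_sumr.
  have -> : \sum_(a' | frs r a' && (a' != a)) (phi a')^* = T^* - (phi a)^* by rewrite hT addrC addKr.
  rewrite mulrBr (phi_unit Hphi); last by case/andP: ha.
  rewrite hr; ring.
rewrite sumrB sumC_const (card_frs r1 s0 Hq) -mulr_suml -/T; ring.
Qed.

Lemma J_zero (F : finFieldType) (r s : nat) (phi : F -> algC) :
  (1 < r)%N -> odd r -> (0 < s)%N -> #|F| = (r ^ s)%N -> (1 : F) != -1 ->
  mult_char phi ->
  Jsum r phi 0 = if [forall a, frs r a ==> (phi a == qchar r a)] then (r.-1)%:R else 0.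
Proof.
move=> r1 rodd s0 Hq H1 Hphi.
rewrite /Jsum (eq_bigr (fun a => qchar r a * phi a)); last by move=> a _; rewrite addr0.
case: ifP => [/forallP H|/negbT].
  rewrite (eq_bigr (fun _ => 1)); first by rewrite sumC_const (card_frs r1 s0 Hq) mulr1.
  by move=> a ha; have := H a; rewrite ha /= => /eqP->; rewrite (qchar_sq r1 rodd s0 Hq).
rewrite negb_forall => /existsP [a]; rewrite negb_imply => /andP[ha na].
apply: (char_sum0 (a := a)); first by case/andP: ha.
- by move=> x; rewrite frs_mulL.
- move=> x /andP[x0 hx]; have /andP[a0 fa] := ha.
  rewrite (qchar_mul r1 rodd s0 Hq H1) // (proj1 Hphi) //; ring.
- apply: contra na => /eqP h.
  have := qchar_sq r1 rodd s0 Hq ha => hsq.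
  apply/eqP; rewrite -[phi a]mul1r -hsq -mulrA h mulr1 //.
Qed.

Lemma core (F : finFieldType) (r s : nat) (phi : F -> algC) :
  (1 < r)%N -> odd r -> (0 < s)%N -> #|F| = (r ^ s)%N -> (1 : F) != -1 ->
  (forall x y : F, (x + y) ^+ r = x ^+ r + y ^+ r) -> (s%:R : F) != 0 ->
  mult_char phi -> nontrivial_char phi ->
  let A := \sum_(x : F | x != 0) phi x * qchar r (trace r s (x + 1)) in
  let C := [forall a, frs r a ==> (phi a == qchar r a)] in
  (~~ C -> A * A^* = #|F|%:R) /\ (C -> A * A^* * r%:R = #|F|%:R).
Proof.
move=> r1 rodd s0 Hq H1 Hadd Hs Hphi Hnt A C.
have r0 : (0 < r)%N by rewrite ltnW.
have f0 : (0 : F) ^+ r == 0 by rewrite expr0n gtn_eqF.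
set sg := (s%:R : F).
have fsg : frs r sg.
  by rewrite /frs Hs /sg -(@trace1 F r s) (trace_fix r0 s0 Hq Hadd) eqxx.
set K := (\sum_(x : F | trace r s x == 0%R) 1)%N.
have hK : #|F|%:R = r%:R * K%:R :> algC by rewrite -natrM kernel_size.
set S0 := Ssum r s phi 0; set S1 := Ssum r s phi 1.
set T := \sum_(a | frs r a) phi a.
have hr1 : (r.-1)%:R = r%:R - 1 :> algC by rewrite -{2}(prednK r0) -natr1 addrK.
have hr0 : (r%:R - 1 : algC) != 0 by rewrite -hr1 pnatr_eq0 -lt0n -ltnS prednK.
have hA : A = qchar r sg * S0 + S1 * Jsum r phi sg.
  rewrite /A (eq_bigr (fun x => phi x * qchar r (trace r s x + sg))); last first.
    by move=> x _; rewrite trace_add // trace1.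
  rewrite (part_tr _ r0 s0 Hq Hadd).
  rewrite (eq_bigr (fun a => qchar r (a + sg) * Ssum r s phi a)); last first.
    move=> a _; rewrite /Ssum mulr_sumr; apply: eq_bigr => x /andP[_ /eqP->].
    by rewrite mulrC.
  rewrite (bigD1 0) //= add0r; congr (_ + _).
  rewrite (eq_bigl (frs r)); last by move=> x; rewrite /frs andbC.
  rewrite /Jsum mulr_sumr; apply: eq_bigr => a ha.
  by rewrite (S_scale s Hphi ha) -/S1; ring.
have hM3 : S0 + T * S1 = 0.
  have := S_total phi r0 s0 Hq Hadd; rewrite (phi_sum0 Hphi Hnt) (bigD1 0) //=.
  rewrite (eq_bigl (frs r)); last by move=> x; rewrite /frs andbC.
  rewrite (eq_bigr (fun a => phi a * S1)); last by move=> a ha; rewrite (S_scale s Hphi ha).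
  by rewrite -mulr_suml.
have hM45 : S0 * S0^* + (r.-1)%:R * (S1 * S1^*) = #|F|%:R - K%:R.
  rewrite -(S_norm r1 s0 Hq Hadd Hphi Hnt) (bigD1 0) //=; congr (_ + _).
  rewrite (eq_bigl (frs r)); last by move=> x; rewrite /frs andbC.
  rewrite (eq_bigr (fun _ => S1 * S1^*)); first by rewrite sumC_const (card_frs r1 s0 Hq).
  move=> a ha; rewrite (S_scale s Hphi ha) rmorphM /= -/S1.
  have := phi_unit Hphi (x := a); case/andP: ha => a0 _ => /(_ a0) hu.
  by rewrite -[RHS]mul1r -hu; ring.
have hJs : Jsum r phi sg * (Jsum r phi sg)^* = Jsum r phi 1 * (Jsum r phi 1)^*.
  rewrite (J_scale r1 rodd s0 Hq H1 Hadd Hphi fsg) !rmorphM /= qchar_conj.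
  have hq := qchar_sq r1 rodd s0 Hq fsg.
  have hu := phi_unit Hphi (x := sg); case/andP: fsg => sg0 _; move/(_ sg0): hu => hu.
  transitivity ((qchar r sg * qchar r sg) * (phi sg * (phi sg)^*) * (Jsum r phi 1 * (Jsum r phi 1)^*)).
    by ring.
  by rewrite hq hu !mul1r.
have hJn : Jsum r phi 0 * (Jsum r phi 0)^* + (r.-1)%:R * (Jsum r phi 1 * (Jsum r phi 1)^*)
    = r%:R * (r.-1)%:R - T * T^*.
  rewrite -(J_norm r1 rodd s0 Hq H1 Hadd Hphi) (bigD1 0) //=; congr (_ + _).
  rewrite (eq_bigl (frs r)); last by move=> x; rewrite /frs andbC.
  rewrite (eq_bigr (fun _ => Jsum r phi 1 * (Jsum r phi 1)^*)).
    by rewrite sumC_const (card_frs r1 s0 Hq).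
  move=> b hb; rewrite (J_scale r1 rodd s0 Hq H1 Hadd Hphi hb) !rmorphM /= qchar_conj.
  have hq := qchar_sq r1 rodd s0 Hq hb.
  have hu := phi_unit Hphi (x := b); case/andP: hb => b0 _; move/(_ b0): hu => hu.
  transitivity ((qchar r b * qchar r b) * (phi b * (phi b)^*) * (Jsum r phi 1 * (Jsum r phi 1)^*)).
    by ring.
  by rewrite hq hu !mul1r.
have hq := qchar_sq r1 rodd s0 Hq fsg.
have hJ0 := J_zero r1 rodd s0 Hq H1 Hphi; rewrite -/C in hJ0.
have hJn1 := hJn.
set v := Jsum r phi 1 * (Jsum r phi 1)^* in hJs hJn1.
set u := S1 * S1^* in hM45.
case: (boolP [forall a, frs r a ==> (phi a == 1)]) => [/forallP Ht | Hnt'].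
  have hT : T = (r.-1)%:R.
    rewrite /T (eq_bigr (fun _ => 1)); first by rewrite sumC_const (card_frs r1 s0 Hq) mulr1.
    by move=> a ha; move: (Ht a); rewrite ha => /eqP.
  have hS0 : S0 = - (T * S1) by apply/eqP; rewrite -addr_eq0 hM3.
  have hJ : Jsum r phi sg = - qchar r sg.
    rewrite /Jsum (eq_bigr (fun a => qchar r (a + sg))); last first.
      by move=> a ha; move: (Ht a); rewrite ha => /eqP ->; rewrite mulr1.
    have := shift_sum (fun a => qchar r a) r0 Hadd (let: conj _ h := andP fsg in h).
    rewrite (eta_sum0 r1 rodd s0 Hq H1) (bigD1 0) //= add0r.
    rewrite (eq_bigl (frs r)); last by move=> x; rewrite /frs andbC.
    by move=> h; apply/eqP; rewrite -addr_eq0 addrC h.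
  have hu : r%:R * u = K%:R.
    have e : (r%:R - 1) * (r%:R * u - K%:R) = 0.
      rewrite -[0](subrr (#|F|%:R - K%:R : algC)) -{1}hM45 hS0 rmorphN rmorphM /= hT.
      rewrite rmorph_nat hr1 hK /u; ring.
    by move/eqP: e; rewrite mulf_eq0 (negbTE hr0) /= subr_eq0 => /eqP.
  have hAA : A * A^* = #|F|%:R.
    rewrite hA hS0 hT hJ !rmorphD /= !rmorphM /= !rmorphN /= !rmorphM /= qchar_conj rmorph_nat hr1 hK -hu /u.
    transitivity (r%:R * (r%:R * (S1 * S1^*)) * (qchar r sg * qchar r sg)); first by ring.
    by rewrite hq mulr1.
  split => // hC; exfalso.
  have [a [ha qa]] := nonsquare r1 rodd s0 Hq.
  move/forallP: hC => /(_ a); rewrite ha /= qa => /eqP hpa.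
  by move: (Ht a); rewrite ha hpa /= (negbTE neg1_neq1).
have hT : T = 0.
  move: Hnt'; rewrite negb_forall => /existsP[a]; rewrite negb_imply => /andP[ha na].
  apply: (char_sum0 (a := a)) => //; first by case/andP: ha.
  - by move=> x; rewrite frs_mulL.
  - move=> x /andP[x0 _]; have /andP[a0 _] := ha; by rewrite (proj1 Hphi).
have hS0 : S0 = 0 by move: hM3; rewrite hT mul0r addr0.
have hu : u = K%:R.
  have e : (r%:R - 1) * (u - K%:R) = 0.
    rewrite -[0](subrr (#|F|%:R - K%:R : algC)) -{1}hM45 hS0 rmorph0 hr1 hK; ring.
  by move/eqP: e; rewrite mulf_eq0 (negbTE hr0) /= subr_eq0 => /eqP.
have hAA : A * A^* = K%:R * v.
  rewrite hA hS0 mulr0 add0r rmorphM /= -hu /u -hJs /v; ring.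
rewrite hT mul0r subr0 in hJn1.
split => [nC | hC]; rewrite hAA hK.
  rewrite (negbTE nC) in hJ0; rewrite hJ0 rmorph0 mul0r add0r in hJn1.
  have e : (r%:R - 1) * (v - r%:R) = 0 by rewrite -[0](subrr (r%:R * (r.-1)%:R : algC)) -{1}hJn1 hr1; ring.
  move/eqP: e; rewrite mulf_eq0 (negbTE hr0) /= subr_eq0 => /eqP ->; ring.
rewrite hC in hJ0; rewrite hJ0 rmorph_nat in hJn1.
have e : (r%:R - 1) * (v - 1) = 0 by rewrite -[0](subrr (r%:R * (r.-1)%:R : algC)) -{1}hJn1 hr1; ring.
move/eqP: e; rewrite mulf_eq0 (negbTE hr0) /= subr_eq0 => /eqP ->; ring.
Qed.
Unset Implicit Arguments. Set Strict Implicit.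

Theorem mainTheorem4 (p t s : nat) (F : finFieldType) (phi : F -> algC) :
  prime p -> odd p -> (0 < t)%N -> (0 < s)%N -> ~~ (p %| s)%N ->
  #|F| = ((p ^ t) ^ s)%N ->
  mult_char phi -> nontrivial_char phi ->
  let r := (p ^ t)%N in
  let q := (r ^ s)%N in
  let A := \sum_(x : F | x != 0) phi x * qchar r (trace r s (x + 1)) in
  let etaphibar_trivial :=
    forall y : F, y != 0 -> in_subfield r y -> qchar r y * (phi y)^* = 1 in
  (~ etaphibar_trivial -> `|A| = sqrtC q%:R) /\
  (etaphibar_trivial -> `|A| = sqrtC q%:R / sqrtC r%:R).
Proof.
move=> hp podd t0 s0 ps HF Hphi Hnt r q A E.
have p1 : (1 < p)%N by apply: prime_gt1.
have r1 : (1 < r)%N by rewrite /r -{1}(expn0 p) ltn_exp2l.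
have rodd : odd r by rewrite /r oddX podd orbT.
have hc : p \in [char F].
  by apply: (@card_finPcharP F p (t * s)) => //; rewrite expnM.
have Haddp : forall x y : F, (x + y) ^+ p = x ^+ p + y ^+ p.
  by move=> x y; rewrite -!(pFrobenius_autE hc) rmorphD.
have Hadd : forall x y : F, (x + y) ^+ r = x ^+ r + y ^+ r.
  by move=> x y; rewrite /r (frob_pow Haddp).
have H1 : (1 : F) != -1.
  apply/negP => /eqP h; have : (2%:R : F) == 0 by rewrite mulr2n {2}h subrr.
  rewrite -(dvdn_pcharf hc) dvdn_prime2 //; move/eqP => p2.
  by move: podd; rewrite p2.
have Hs : (s%:R : F) != 0 by rewrite -(dvdn_pcharf hc).
have [h1 h2] := core r1 rodd s0 HF H1 Hadd Hs Hphi Hnt.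
rewrite -/A in h1 h2.
set C := [forall a, frs r a ==> (phi a == qchar r a)] in h1 h2.
have EC : E <-> C.
  split.
    move=> hE; apply/forallP => a; apply/implyP => ha; have /andP[a0 fa] := ha.
    have := hE a a0 fa => h.
    have hq := qchar_sq r1 rodd s0 HF ha.
    have : (phi a)^* = qchar r a by rewrite -[_^*]mul1r -hq -mulrA h mulr1.
    by move/(congr1 (fun z => z^* )); rewrite conjCK qchar_conj => ->.
  move=> /forallP hC y y0 fy.
  have hy : frs r y by rewrite /frs y0.
  have := hC y; rewrite hy /= => /eqP ->.
  by rewrite qchar_conj (qchar_sq r1 rodd s0 HF hy).
have nA : `|A| ^+ 2 = A * A^* by rewrite normCK.
have HFq : #|F| = q by rewrite HF.
split.
  move=> nE; have nC : ~~ C by apply/negP => /EC.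
  by rewrite -HFq -h1 // -nA sqrCK.
move=> hE; have hC : C by apply/EC.
have := h2 hC; rewrite HFq -nA => <-.
rewrite sqrtCM ?nnegrE ?exprn_ge0 ?ler0n // sqrCK // mulfK //.
by rewrite sqrtC_eq0 pnatr_eq0 -lt0n ltnW.
Qed.
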